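(* Let $(Q,\cdot,\times,\mathrm{tr}_\cdot,\mathrm{tr}_\times,\pi,\mu)$ be a character algebra with $1_\cdot\times1_\cdot=n1_\cdot$, and let $d=\dim Q$. (1) Both $(Q,\cdot)$ and $(Q,\times)$ are isomorphic as algebras to $\mathbb{C}^d$. Let $\{\mathrm{X}_i\}_{i=1}^d$ be the minimal idempotents of $(Q,\cdot)$ and $\{\Psi_j\}_{j=1}^d$ those of $(Q,\times)$. (2) $\pi\mathrm{X}_i=\mathrm{X}_i$ and $\mu\Psi_j=\Psi_j$ for all $i,j$; $\mu$ permutes the $\mathrm{X}_i$ and $\pi$ permutes the $\Psi_j$, defining involutions (also denoted $\mu,\pi$) of the index sets by $\mu\mathrm{X}_i=\mathrm{X}_{\mu(i)}$, $\pi\Psi_j=\Psi_{\pi(j)}$. (3) Setting $A_i:=(\mathrm{X}_i,\mathrm{X}_i)$, $B_j:=(\Psi_j,\Psi_j)$, $C_{ij}:=(\mathrm{X}_i,\Psi_j)$, one has $(\mathrm{X}_i,\mathrm{X}_{i'})=A_i\delta_{ii'}$, $(\Psi_j,\Psi_{j'})=B_j\delta_{jj'}$, $A_i=\mathrm{tr}_\cdot(\mathrm{X}_i)>0$, $B_j=\mathrm{tr}_\times(\Psi_j)>0$, and $$B_k\delta_{kl}=\sum_{i=1}^d A_i^{-1}\,\overline{C_{ik}}\,C_{il},\qquad A_i\delta_{ij}=\sum_{s=1}^d B_s^{-1}C_{is}\overline{C_{js}} .$$ Moreover $A_{\mu(i)}=A_i$, $B_{\pi(j)}=B_j$, $C_{i\pi(j)}=\overline{C_{ij}}$,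 $C_{\mu(i)j}=\overline{C_{ij}}$. (4) Conversely, the data $(A,B,C)$ together with the involutions $\mu,\pi$ on the index sets determine the character algebra up to isomorphism. (5) $1_\cdot/n$ is an idempotent for $\times$ and $1_\times$ is an idempotent for $\cdot$; writing $1_\cdot/n=\sum_j n_j\Psi_j$ and $1_\times=\sum_i m_i\mathrm{X}_i$ with $n_j,m_i\in\{0,1\}$, one has $$A_i=n\sum_j C_{ij}n_j,\qquad B_j=\sum_i C_{ij}m_i .$$ In particular, if $1_\cdot/n=\Psi_1$ and $1_\times=\mathrm{X}_1$, then $A_i=nC_{i1}$ and $B_j=C_{1j}$.
   Context: A character algebra is a finite-dimensional complex vector space $Q$ with two commutative associative unital bilinear products $\cdot$ (unit $1_\cdot$) and $\times$ (unit $1_\times$), two linear functionals $\mathrm{tr}_\cdot,\mathrm{tr}_\times:Q\to\mathbb{C}$, and two commuting complex-antilinear involutions $\pi,\mu$ of $Q$, each of which is a ring automorphism for both products, such that: (i) $\mathrm{tr}_\cdot(\pi a)=\mathrm{tr}_\cdot(\mu a)=\overline{\mathrm{tr}_\cdot(a)}$ and $\mathrm{tr}_\times(\pi a)=\mathrm{tr}_\times(\mu a)=\overline{\mathrm{tr}_\times(a)}$ for all $a$; (ii) $\mathrm{tr}_\cdot(a\cdot\pi b)=\mathrm{tr}_\times(a\times\mu b)$ for all $a,b$, and this common value is denoted $(a,b)$; (iii) $(a,a)>0$ for all $a\neq 0$; (iv) $1_\times\cdot 1_\times=1_\times$ and $1_\cdot\times 1_\cdot=n\,1_\cdot$ for some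 real $n>0$. An isomorphism of character algebras is a linear bijection intertwining both products, both functionals and both involutions. *)

(* Defs.v *)
(* The complex field is abstracted as an arbitrary
   numClosedFieldType C (algebraically closed, with conjugation ^* and the
   partial order in which 0 < z means "z is a positive real"). *)
From HB Require Import structures.
From mathcomp Require Import all_boot all_order all_algebra.
Set Implicit Arguments. Unset Strict Implicit. Unset Printing Implicit Defensive.
Import Order.TTheory GRing.Theory Num.Theory Num.Syntax.
Local Open Scope ring_scope.

Record ops (C : numClosedFieldType) (Q : vectType C) := Ops {
  dot : Q -> Q -> Q;
  cross : Q -> Q -> Q;
  one_d : Q;
  one_x : Q;
  tr_d : Q -> C;
  tr_x : Q -> C;
  piA : Q -> Q;
  muA : Q -> Q }.

Section CharAlg.
Variables (C : numClosedFieldType).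

Definition comm_assoc_unital_bilinear (Q : vectType C) (m : Q -> Q -> Q) (e : Q) :=
  [/\ forall (a : C) (x y z : Q), m (a *: x + y) z = a *: m x z + m y z,
      forall (a : C) (x y z : Q), m z (a *: x + y) = a *: m z x + m z y,
      forall x y, m x y = m y x,
      forall x y z, m x (m y z) = m (m x y) z &
      forall x, m e x = x].

Definition lin_functional (Q : vectType C) (t : Q -> C) :=
  forall (a : C) (x y : Q), t (a *: x + y) = a * t x + t y.

Definition antilinear (Q : vectType C) (f : Q -> Q) :=
  forall (a : C) (x y : Q), f (a *: x + y) = (a^*) *: f x + f y.

Definition ring_aut (Q : vectType C) (m : Q -> Q -> Q) (e : Q) (f : Q -> Q) :=
  bijective f /\ (forall x y, f (m x y) = m (f x) (f y)) /\ f e = e.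

Definition is_char_algebra (Q : vectType C) (o : ops Q) : Prop :=
  [/\ comm_assoc_unital_bilinear (dot o) (one_d o)
      /\ comm_assoc_unital_bilinear (cross o) (one_x o)
      /\ lin_functional (tr_d o) /\ lin_functional (tr_x o),
      [/\ antilinear (piA o), antilinear (muA o),
          involutive (piA o), involutive (muA o) &
          forall x, piA o (muA o x) = muA o (piA o x)],
      [/\ ring_aut (dot o) (one_d o) (piA o), ring_aut (cross o) (one_x o) (piA o),
          ring_aut (dot o) (one_d o) (muA o) & ring_aut (cross o) (one_x o) (muA o)],
      [/\
      (forall a, [/\ tr_d o (piA o a) = (tr_d o a)^*, tr_d o (muA o a) = (tr_d o a)^*,
                     tr_x o (piA o a) = (tr_x o a)^* & tr_x o (muA o a) = (tr_x o a)^*]),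
      (forall a b, tr_d o (dot o a (piA o b)) = tr_x o (cross o a (muA o b))) &
      (forall a, a != 0 -> 0 < tr_d o (dot o a (piA o a)))] &
      dot o (one_x o) (one_x o) = one_x o /\
      exists n : C, [/\ n \is Num.real, 0 < n & cross o (one_d o) (one_d o) = n *: one_d o]].

Definition ip (Q : vectType C) (o : ops Q) (a b : Q) : C := tr_d o (dot o a (piA o b)).

Definition alg_iso_Cd (Q : vectType C) (m : Q -> Q -> Q) (e : Q) (d : nat) :=
  exists f : Q -> 'rV[C]_d,
    [/\ forall (a : C) x y, f (a *: x + y) = a *: f x + f y,
        bijective f,
        forall x y i, f (m x y) 0 i = f x 0 i * f y 0 i &
        forall i, f e 0 i = 1].

Definition min_idem (Q : vectType C) (m : Q -> Q -> Q) (e : Q) :=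
  [/\ e != 0, m e e = e &
      forall f, m f f = f -> m f e = f -> f = 0 \/ f = e].

Definition enumerates (Q : vectType C) (d : nat) (P : Q -> Prop) (X : 'I_d -> Q) :=
  injective X /\ forall e, P e <-> exists i, e = X i.

Definition char_alg_iso (Q Q' : vectType C) (o : ops Q) (o' : ops Q') (f : Q -> Q') :=
  [/\ forall (a : C) x y, f (a *: x + y) = a *: f x + f y,
      bijective f,
      (forall x y, f (dot o x y) = dot o' (f x) (f y)) /\
      (forall x y, f (cross o x y) = cross o' (f x) (f y)),
      (forall x, tr_d o' (f x) = tr_d o x) /\ (forall x, tr_x o' (f x) = tr_x o x) &
      (forall x, f (piA o x) = piA o' (f x)) /\ (forall x, f (muA o x) = muA o' (f x))].

End CharAlg.

(* Main.v *)
Require Import Defs.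
From HB Require Import structures.
From mathcomp Require Import all_boot all_order all_algebra spectral.
From Stdlib Require Import Classical.
Set Implicit Arguments. Unset Strict Implicit. Unset Printing Implicit Defensive.
Import Order.TTheory GRing.Theory Num.Theory Num.Syntax.
Import passmx.
Local Open Scope ring_scope.

Section Basic.
Variables (C : numClosedFieldType) (Q : vectType C) (m : Q -> Q -> Q) (e : Q).
Hypothesis Hm : comm_assoc_unital_bilinear m e.

Lemma mC x y : m x y = m y x. Proof. by case: Hm. Qed.
Lemma mA x y z : m x (m y z) = m (m x y) z. Proof. by case: Hm. Qed.
Lemma m1 x : m e x = x. Proof. by case: Hm. Qed.
Lemma mr1 x : m x e = x. Proof. by rewrite mC m1. Qed.
Lemma mPr z a x y : m z (a *: x + y) = a *: m z x + m z y. Proof. by case: Hm. Qed.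
Lemma mlinr z : linear (m z). Proof. by move=> a x y; rewrite mPr. Qed.
Definition mz (z : Q) : Q -> Q := m z.
HB.instance Definition _ z := GRing.isLinear.Build C Q Q *:%R (mz z) (mlinr z).
Lemma mDr z x y : m z (x + y) = m z x + m z y.
Proof. exact: (linearD (mz z)). Qed.
Lemma mZr z a x : m z (a *: x) = a *: m z x.
Proof. exact: (linearZ_LR (mz z)). Qed.
Lemma m0r z : m z 0 = 0. Proof. exact: (linear0 (mz z)). Qed.
Lemma mNr z x : m z (- x) = - m z x. Proof. exact: (linearN (mz z)). Qed.
Lemma mBr z x y : m z (x - y) = m z x - m z y. Proof. exact: (linearB (mz z)). Qed.
Lemma mDl z x y : m (x + y) z = m x z + m y z. Proof. by rewrite !(mC _ z) mDr. Qed.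
Lemma mZl z a x : m (a *: x) z = a *: m x z. Proof. by rewrite !(mC _ z) mZr. Qed.
Lemma m0l z : m 0 z = 0. Proof. by rewrite mC m0r. Qed.
Lemma mBl z x y : m (x - y) z = m x z - m y z. Proof. by rewrite !(mC _ z) mBr. Qed.
Lemma msumr z I (r : seq I) (P : pred I) (F : I -> Q) :
  m z (\sum_(i <- r | P i) F i) = \sum_(i <- r | P i) m z (F i).
Proof. exact: (linear_sum (mz z)). Qed.
Lemma msuml z I (r : seq I) (P : pred I) (F : I -> Q) :
  m (\sum_(i <- r | P i) F i) z = \sum_(i <- r | P i) m (F i) z.
Proof. by rewrite mC msumr; apply: eq_bigr => i _; rewrite mC. Qed.

Definition Lend z : 'End(Q) := linfun (mz z).
Lemma LendE z x : Lend z x = m z x.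
Proof. by rewrite lfunE. Qed.
End Basic.

Section Lin.
Variables (C : numClosedFieldType) (Q : vectType C) (t : Q -> C).
Hypothesis Ht : lin_functional t.
Lemma tlin : linear_for *%R t. Proof. by move=> a x y; rewrite Ht. Qed.
Definition tt' : Q -> C^o := t.
Lemma tlin' : linear tt'. Proof. by move=> a x y; rewrite /tt' Ht. Qed.
HB.instance Definition _ := GRing.isLinear.Build C Q C^o *:%R tt' tlin'.
Lemma tD x y : t (x + y) = t x + t y. Proof. exact: (linearD tt'). Qed.
Lemma tZ a x : t (a *: x) = a * t x. Proof. exact: (linearZ_LR tt'). Qed.
Lemma t0 : t 0 = 0. Proof. exact: (linear0 tt'). Qed.
Lemma tB x y : t (x - y) = t x - t y. Proof. exact: (linearB tt'). Qed.
Lemma tsum I (r : seq I) (P : pred I) (F : I -> Q) :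
  t (\sum_(i <- r | P i) F i) = \sum_(i <- r | P i) t (F i).
Proof. exact: (linear_sum tt'). Qed.
End Lin.

Section Anti.
Variables (C : numClosedFieldType) (Q : vectType C) (s : Q -> Q).
Hypothesis Hs : antilinear s.
Lemma sD x y : s (x + y) = s x + s y.
Proof. by have := Hs 1 x y; rewrite scale1r rmorph1 scale1r. Qed.
Lemma s0 : s 0 = 0.
Proof. by have := sD 0 0; rewrite addr0 => /esym/eqP; rewrite -subr_eq0 addrK => /eqP. Qed.
Lemma sZ a x : s (a *: x) = a^* *: s x.
Proof. by have := Hs a x 0; rewrite !addr0 s0 addr0. Qed.
Lemma sN x : s (- x) = - s x.
Proof. by rewrite -scaleN1r sZ rmorphN1 scaleN1r. Qed.
Lemma sB x y : s (x - y) = s x - s y. Proof. by rewrite sD sN. Qed.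
Lemma ssum I (r : seq I) (P : pred I) (F : I -> Q) :
  s (\sum_(i <- r | P i) F i) = \sum_(i <- r | P i) s (F i).
Proof. exact: (big_morph s sD s0). Qed.
End Anti.

Section Gen.
Variables (C : numClosedFieldType) (Q : vectType C) (m : Q -> Q -> Q) (e : Q)
  (s : Q -> Q) (t : Q -> C).
Hypotheses (Hm : comm_assoc_unital_bilinear m e) (Ht : lin_functional t)
  (Hs : antilinear s) (Hsi : involutive s) (Hsa : ring_aut m e s)
  (Hts : forall a, t (s a) = (t a)^*)
  (Hpos : forall a, a != 0 -> 0 < t (m a (s a))).

Let mC := mC Hm. Let mA := mA Hm. Let m1 := m1 Hm. Let mr1 := mr1 Hm.
Let mDl := mDl Hm. Let mDr := mDr Hm. Let mZl := mZl Hm. Let mZr := mZr Hm.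
Let m0l := m0l Hm. Let m0r := m0r Hm. Let msuml := msuml Hm. Let msumr := msumr Hm.
Let mBl := mBl Hm. Let mBr := mBr Hm.
Let tD := tD Ht. Let tZ := tZ Ht. Let t0 := t0 Ht. Let tsum := tsum Ht.
Let sD := sD Hs. Let sZ := sZ Hs. Let s0 := s0 Hs. Let ssum := ssum Hs.

Definition hf x y := t (m x (s y)).

Lemma sm x y : s (m x y) = m (s x) (s y). Proof. by case: Hsa => _ []. Qed.
Lemma se : s e = e. Proof. by case: Hsa => _ []. Qed.

Lemma hDl x y z : hf (x + y) z = hf x z + hf y z.
Proof. by rewrite /hf mDl tD. Qed.
Lemma hZl a x z : hf (a *: x) z = a * hf x z.
Proof. by rewrite /hf mZl tZ. Qed.
Lemma hDr x y z : hf z (x + y) = hf z x + hf z y.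
Proof. by rewrite /hf sD mDr tD. Qed.
Lemma hZr a x z : hf z (a *: x) = a^* * hf z x.
Proof. by rewrite /hf sZ mZr tZ. Qed.
Lemma h0r z : hf z 0 = 0. Proof. by rewrite /hf s0 m0r t0. Qed.
Lemma h0l z : hf 0 z = 0. Proof. by rewrite /hf m0l t0. Qed.
Lemma hsuml z I (r : seq I) (P : pred I) (F : I -> Q) :
  hf (\sum_(i <- r | P i) F i) z = \sum_(i <- r | P i) hf (F i) z.
Proof. by rewrite /hf msuml tsum. Qed.
Lemma hC x y : hf y x = (hf x y)^*.
Proof. by rewrite /hf -Hts sm Hsi mC. Qed.
Lemma hadj x y z : hf (m x y) z = hf y (m (s x) z).
Proof. by rewrite /hf sm Hsi !mA (mC x y). Qed.
Lemma hpos x : x != 0 -> 0 < hf x x. Proof. exact: Hpos. Qed.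
Lemma hx0 x : hf x x = 0 -> x = 0.
Proof. by move=> H; case: (eqVneq x 0) => // /hpos; rewrite H ltxx. Qed.

Lemma red x : m x x = 0 -> x = 0.
Proof.
move=> xx; pose b := m (s x) x.
have hb : hf b b = 0.
  by rewrite /b hadj Hsi mA (mC x (s x)) -mA xx m0r h0r.
have b0 := hx0 hb.
by apply: hx0; rewrite -{1}(mr1 x) hadj -/b b0 h0r.
Qed.

End Gen.

Lemma eigen_sub (C : numClosedFieldType) (W : vectType C) (phi : 'End(W)) (V : {vspace W}) :
  V != 0%VS -> (forall v, v \in V -> phi v \in V) ->
  exists a v, [/\ v \in V, v != 0 & phi v = a *: v].
Proof.
move=> V0 Vst.
pose psi : 'End(subvs_of V) := linfun (vsproj V \o phi \o vsval).
have dpos : (0 < \dim {:subvs_of V})%N.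
  by rewrite dimvf /dim /= lt0n dimv_eq0.
pose e := vbasis {:subvs_of V}.
have [a ha] := eigenvalue_closed (mxof e e psi) dpos.
have : leigenvalue psi a.
  rewrite /leigenvalue (leigenspaceE (vbasisP _)).
  by rewrite (vsof_eq0 (vbasisP _)).
rewrite /leigenvalue -vpick0; set w := vpick _ => w0.
have : w \in leigenspace psi a by apply: memv_pick.
rewrite /leigenspace memv_ker !lfunE /= !lfunE /= subr_eq0 => /eqP hw.
exists a, (vsval w); split; first exact: subvsP.
  by apply: contra w0 => /eqP h; apply/eqP/subvs_inj; rewrite h linear0.
rewrite -[LHS](vsprojK (U:=V)) ?hw ?lfunE /= ?lfunE ?linearZ //. by apply: Vst; apply: subvsP.
Qed.

Section Decomp.
Variables (C : numClosedFieldType) (Q : vectType C) (m : Q -> Q -> Q) (e : Q).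
Hypotheses (Hm : comm_assoc_unital_bilinear m e) (Hred : forall x, m x x = 0 -> x = 0).
Let mC := mC Hm. Let mA := mA Hm. Let m1 := m1 Hm. Let mr1 := mr1 Hm.
Let mDl := mDl Hm. Let mDr := mDr Hm. Let mZl := mZl Hm. Let mZr := mZr Hm.
Let m0l := m0l Hm. Let m0r := m0r Hm. Let msuml := msuml Hm. Let msumr := msumr Hm.
Let mBl := mBl Hm. Let mBr := mBr Hm. Let LendE := LendE Hm.

Definition idem p := m p p = p.
Definition prim p := forall x, exists a, m x p = a *: p.

Lemma m4 a b c d : m (m a b) (m c d) = m (m a c) (m b d).
Proof. by rewrite -!mA (mA b) (mC b c) -mA. Qed.

Lemma mCA a b c : m a (m b c) = m b (m a c).
Proof. by rewrite !mA (mC a b). Qed.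

Lemma prim0 : prim 0.
Proof. by move=> x; exists 0; rewrite m0r scale0r. Qed.

Lemma split_idem u : idem u -> ~ prim u ->
  exists f g, [/\ idem f, idem g, f != 0, g != 0 & m f g = 0 /\ f + g = u].
Proof.
move=> uu /not_all_ex_not [x /not_ex_all_not hx].
pose c := m x u.
have cu : m c u = c by rewrite /c -mA uu.
have u0 : u != 0 by apply/eqP => u0; apply: (hx 0); rewrite u0 m0r scale0r.
pose V := limg (Lend m u).
have uV : u \in V by apply/memv_imgP; exists u; rewrite ?memvf // LendE uu.
have V0 : V != 0%VS by apply: contra u0 => /eqP V0; move: uV; rewrite V0 memv0.
have [a [v [vV v0 hv]]] : exists a v, [/\ v \in V, v != 0 & Lend m c v = a *: v].
  apply: eigen_sub => // w /memv_imgP [y _ ->]; apply/memv_imgP.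
  by exists (m c y); rewrite ?memvf // !LendE mCA.
rewrite LendE in hv.
have uv : m u v = v.
  by move/memv_imgP: vV => [y _ ->]; rewrite LendE mA uu.
pose b := c - a *: u.
have b0 : b != 0.
  by apply/eqP => /eqP; rewrite subr_eq0 => /eqP cb; apply: (hx a).
have bv : m b v = 0 by rewrite /b mBl mZl uv hv subrr.
pose K := lker (Lend m b); pose I := limg (Lend m b).
have KI z : z \in K -> z \in I -> z = 0.
  rewrite memv_ker LendE => /eqP bz /memv_imgP [y _ zy].
  by apply: Hred; rewrite {1}zy LendE (mC b y) -mA bz m0r.
have KIf : (K + I)%VS = fullv.
  apply/eqP; rewrite eqEdim subvf /= dimv_disjoint_sum.
    by rewrite -(limg_ker_dim (Lend m b) fullv) capfv addnC.
  apply/eqP; rewrite -subv0; apply/subvP => z /memv_capP [zK zI].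
  by rewrite (KI z zK zI) mem0v.
have : e \in (K + I)%VS by rewrite KIf memvf.
move/memv_addP => [f' f'K [g' g'I ef]].
pose f := m u f'; pose g := m u g'.
have fK : f \in K.
  by move: f'K; rewrite !memv_ker !LendE => /eqP bf; rewrite mCA bf m0r.
have gI : g \in I.
  by rewrite /g; move/memv_imgP: g'I => [y _ ->]; apply/memv_imgP; exists (m u y);
    rewrite ?memvf // !LendE mCA.
have KIm z w : z \in K -> w \in I -> m z w = 0.
  move=> zK wI; apply: KI.
    by move: zK; rewrite !memv_ker !LendE => /eqP bz; rewrite mA bz m0l.
  by move/memv_imgP: wI => [y _ ->]; apply/memv_imgP; exists (m z y);
    rewrite ?memvf // !LendE mCA.
have fgu : f + g = u by rewrite /f /g -mDr -ef mr1.
have fg : m f g = 0 by apply: KIm.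
have fu : m f u = f by rewrite /f mC mA uu.
have gu : m g u = g by rewrite /g mC mA uu.
exists f, g; split => //.
- by rewrite /idem -[RHS]fu -[in RHS]fgu mDr fg addr0.
- by rewrite /idem -[RHS]gu -[in RHS]fgu mDr (mC g f) fg add0r.
- apply: contra v0 => /eqP f0; apply/eqP.
  have vK : v \in K by rewrite memv_ker LendE bv.
  by rewrite -uv mC -fgu mDr f0 m0r add0r (KIm _ _ vK gI).
- apply: contra b0 => /eqP g0; apply/eqP.
  have bu : m b u = b by rewrite /b mBl mZl uu cu.
  have bf : m b f = 0 by move: fK; rewrite memv_ker LendE => /eqP.
  by rewrite -bu -fgu g0 addr0 bf.
Qed.

Lemma sum_orth (r : seq Q) p : uniq r -> p \in r -> idem p ->
  (forall q, q \in r -> q != p -> m p q = 0) ->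
  m p (\sum_(q <- r) q) = p.
Proof.
move=> ur pr pp orth; rewrite (bigD1_seq p pr ur) /= mDr pp msumr big1_seq ?addr0 //.
by move=> q /andP [qp qr]; apply: orth.
Qed.

Definition decomp_of (u : Q) (r : seq Q) :=
  [/\ uniq r, forall p, p \in r -> [/\ idem p, p != 0 & prim p],
      forall p q, p \in r -> q \in r -> p != q -> m p q = 0 &
      \sum_(p <- r) p = u].

Lemma decomp_below r u p : decomp_of u r -> p \in r -> m p u = p.
Proof.
move=> [ur rp orth <-] pr; have [pp _ _] := rp p pr.
by apply: sum_orth => // q qr qp; apply: orth => //; rewrite eq_sym.
Qed.

Lemma decomp u : idem u -> exists r, decomp_of u r.
Proof.
have [k] := ubnP (\dim (limg (Lend m u))); elim: k u => // k IH u dimu uu.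
have [u0|u0] := eqVneq u 0.
  by exists [::]; split => //; rewrite big_nil u0.
case: (classic (prim u)) => pu.
  exists [:: u]; split => //.
  - by move=> p; rewrite inE => /eqP ->.
  - by move=> p q; rewrite !inE => /eqP -> /eqP ->; rewrite eqxx.
  by rewrite big_seq1.
have [f [g [ff gg f0 g0 [fg fgu]]]] := split_idem uu pu.
have fu : m f u = f by rewrite -fgu mDr ff fg addr0.
have gu : m g u = g by rewrite -fgu mDr gg (mC g f) fg add0r.
have sub w : idem w -> w != 0 -> m w u = w -> m u w != u -> (\dim (limg (Lend m w)) < k)%N.
  move=> ww w0 wu uw; rewrite -ltnS; apply: leq_trans dimu; rewrite ltnS.
  rewrite (ltn_leqif (dimv_leqif_sup _)).
    apply/negP => /subvP /(_ u) H.
    have : u \in limg (Lend m w) by apply: H; apply/memv_imgP; exists u; rewrite ?memvf // LendE uu.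
    move/memv_imgP => [y _]; rewrite LendE => uwy.
    by move: uw; rewrite {1}uwy (mC _ w) mA ww -uwy eqxx.
  apply/subvP => z /memv_imgP [y _ ->]; apply/memv_imgP; exists (m w y); rewrite ?memvf //.
  by rewrite !LendE mA (mC u w) wu.
have [rf df] : exists r, decomp_of f r.
  apply: (IH f _ ff); apply: (sub f ff f0 fu); apply/eqP => uf.
  have : g = 0 by rewrite -gu -uf mA gu (mC g f) fg.
  by move/eqP; rewrite (negbTE g0).
have [rg dg] : exists r, decomp_of g r.
  apply: (IH g _ gg); apply: (sub g gg g0 gu); apply/eqP => ug.
  have : f = 0 by rewrite -fu -ug mA fu fg.
  by move/eqP; rewrite (negbTE f0).
have cross p q : p \in rf -> q \in rg -> m p q = 0.
  move=> pr qr; rewrite -(decomp_below df pr) -(decomp_below dg qr).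
  by rewrite m4 fg m0r.
case: df => urf rfp orf sf; case: dg => urg rgp org sg.
exists (rf ++ rg); split.
- rewrite cat_uniq urf urg andbT; apply/hasPn => q qg; apply/negP => qf.
  have [qq q0 _] := rgp q qg.
  by move: q0; rewrite -qq cross // eqxx.
- by move=> p; rewrite mem_cat => /orP [/rfp|/rgp].
- move=> p q; rewrite !mem_cat => /orP [pf|pg] /orP [qf|qg] pq.
  + exact: orf.
  + exact: cross.
  + by rewrite mC cross.
  + exact: org.
by rewrite big_cat /= sf sg.
Qed.

End Decomp.

Section MinIdem.
Variables (C : numClosedFieldType) (Q : vectType C) (m : Q -> Q -> Q) (e : Q).
Hypotheses (Hm : comm_assoc_unital_bilinear m e) (Hred : forall x, m x x = 0 -> x = 0).
Let mC := mC Hm. Let mA := mA Hm. Let m1 := m1 Hm. Let mr1 := mr1 Hm.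
Let mDl := mDl Hm. Let mDr := mDr Hm. Let mZl := mZl Hm. Let mZr := mZr Hm.
Let m0l := m0l Hm. Let m0r := m0r Hm. Let msuml := msuml Hm. Let msumr := msumr Hm.
Let mBl := mBl Hm. Let mBr := mBr Hm. Let m4 := m4 Hm.

Lemma idem_scal a q : q != 0 -> m (a *: q) (a *: q) = a *: q -> m q q = q ->
  a = 0 \/ a = 1.
Proof.
move=> q0 aa qq; move: aa; rewrite mZl mZr qq scalerA => /eqP; rewrite -subr_eq0 -scalerBl.
rewrite scaler_eq0 (negbTE q0) orbF subr_eq0 => /eqP.
rewrite -[RHS]mulr1 => /eqP; rewrite -subr_eq0 -mulrBr mulf_eq0 subr_eq0.
by case/orP => /eqP ->; [left|right].
Qed.

Lemma prim_min p : m p p = p -> p != 0 -> prim m p -> min_idem m p.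
Proof.
move=> pp p0 pr; split => // f ff fp.
have [a fa] := pr f; rewrite fp in fa.
have [] := @idem_scal a p p0 _ pp; first by rewrite -fa.
  by move=> a0; left; rewrite fa a0 scale0r.
by move=> a1; right; rewrite fa a1 scale1r.
Qed.

Lemma min_in r p : decomp_of m e r -> min_idem m p -> p \in r.
Proof.
move=> [ur rp orth sr] [p0 pp pmin].
have : p = \sum_(q <- r) m p q by rewrite -msumr sr mr1.
case: (boolP (has (fun q => m p q != 0) r)) => [/hasP [q qr pq0] _|].
  have [qq q0 qpr] := rp q qr.
  have [a pqa] := qpr p.
  have mpq_idem : m (m p q) (m p q) = m p q by rewrite m4 pp qq.
  have [a0|a1] := idem_scal q0 (etrans (f_equal (fun z => m z z) (esym pqa)) (etrans mpq_idem pqa)) qq.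
    by move: pq0; rewrite pqa a0 scale0r eqxx.
  have qp : m q p = q by rewrite mC pqa a1 scale1r.
  by case: (pmin q qq qp) => [q0'|<-] //; move: q0; rewrite q0' eqxx.
move/hasPn => H pe; move: p0; rewrite {1}pe big1_seq ?eqxx //.
by move=> q /andP [_ /H]; rewrite negbK => /eqP.
Qed.

Lemma min_orth p q : min_idem m p -> min_idem m q -> p != q -> m p q = 0.
Proof.
move=> mp mq pq.
have [r dr] := decomp Hm Hred (m1 e).
case: (dr) => _ _ orth _.
by apply: orth => //; apply: min_in.
Qed.

Lemma min_prim p : min_idem m p -> prim m p.
Proof.
move=> mp; have [r dr] := decomp Hm Hred (m1 e).
by case: (dr) => _ rp _ _; case: (rp p (min_in dr mp)).
Qed.

Lemma exists_enum : exists X : 'I_(\dim {:Q}) -> Q, enumerates (min_idem m) X.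
Proof.
have [r dr] := decomp Hm Hred (m1 e).
case: (dr) => ur rp orth sr.
have fr : free r.
  suff : free (in_tuple r) by [].
  apply/freeP => k ks i.
  have := f_equal (m r`_i) ks; rewrite m0r msumr (bigD1 i) //= mZr.
  have [ii i0 _] := rp _ (mem_nth 0 (ltn_ord i)).
  rewrite ii big1 ?addr0.
    by move/eqP; rewrite scaler_eq0 (negbTE i0) orbF => /eqP.
  move=> j ji; rewrite mZr orth ?scaler0 ?mem_nth //.
  by rewrite nth_uniq // eq_sym.
have spr : <<r>>%VS = fullv.
  apply/eqP; rewrite eqEsubv subvf /=; apply/subvP => x _.
  rewrite -[x]mr1 -sr msumr big_seq; apply: rpred_sum => q qr.
  have [_ _ qpr] := rp q qr; have [a ->] := qpr x.
  by apply: rpredZ; apply: memv_span.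
have hd : size r = \dim {:Q} by rewrite -spr; apply/esym/eqP.
exists (fun i => nth 0 r i); split.
  by move=> i j /eqP; rewrite nth_uniq ?hd // => /eqP /val_inj.
move=> p; split.
  move=> mp; have pr := min_in dr mp.
  have pi : (index p r < \dim {:Q})%N by rewrite -hd index_mem.
  by exists (Ordinal pi); rewrite /= nth_index.
move=> [i ->]; have ir : nth 0 r i \in r by apply: mem_nth; rewrite hd.
by have [ii i0 ipr] := rp _ ir; apply: prim_min.
Qed.

Section Enum.
Variable k : nat.
Variable X : 'I_k -> Q.
Hypothesis HX : enumerates (min_idem m) X.

Lemma X_min i : min_idem m (X i).
Proof. by case: HX => _ H; apply/H; exists i. Qed.
Lemma X_idem i : m (X i) (X i) = X i. Proof. by case: (X_min i). Qed.
Lemma X_neq0 i : X i != 0. Proof. by case: (X_min i). Qed.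
Lemma X_prim i : prim m (X i). Proof. exact: min_prim (X_min i). Qed.
Lemma X_orth i j : i != j -> m (X i) (X j) = 0.
Proof.
move=> ij; apply: min_orth; try exact: X_min.
by apply: contra ij => /eqP H; case: HX => inj _; rewrite (inj _ _ H).
Qed.
Lemma X_orthE i j : m (X i) (X j) = (i == j)%:R *: X i.
Proof.
by case: (eqVneq i j) => [->|ij]; rewrite ?X_idem ?scale1r // X_orth // scale0r.
Qed.
Lemma X_sum : \sum_i X i = e.
Proof.
have [r dr] := decomp Hm Hred (m1 e).
case: (dr) => ur rp orth sr.
apply/eqP; rewrite eq_sym -subr_eq0; apply/eqP.
set y := _ - _.
have yX l : m y (X l) = 0.
  rewrite mBl m1 msuml (bigD1 l) //= X_idem big1 ?addr0 ?subrr //.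
  by move=> j jk; apply: X_orth.
rewrite -[y]mr1 -sr msumr big1_seq // => q /andP [_ qr].
have [qq q0 qpr] := rp q qr.
have : min_idem m q by apply: prim_min.
by case: HX => _ H /H [l ->].
Qed.

Lemma X_expand x : x = \sum_i m x (X i).
Proof. by rewrite -msumr X_sum mr1. Qed.

End Enum.

Lemma aut_min (tau : Q -> Q) : antilinear tau -> involutive tau -> ring_aut m e tau ->
  forall p, min_idem m p -> min_idem m (tau p).
Proof.
move=> tl ti [_ [tm te]] p [p0 pp pmin]; split.
- by apply: contra p0 => /eqP H; rewrite -[p]ti H (s0 tl).
- by rewrite -tm pp.
move=> f ff fp.
have : m (tau f) (tau f) = tau f by rewrite -tm ff.
move=> ff'; have : m (tau f) p = tau f by rewrite -[in X in m _ X](ti p) -tm fp.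
move=> /(pmin _ ff') [H|H].
  by left; rewrite -[f]ti H (s0 tl).
by right; rewrite -H ti.
Qed.

Lemma aut_perm k (X : 'I_k -> Q) (tau : Q -> Q) :
  enumerates (min_idem m) X ->
  antilinear tau -> involutive tau -> ring_aut m e tau ->
  exists tau' : 'I_k -> 'I_k,
    involutive tau' /\ forall i, tau (X i) = X (tau' i).
Proof.
move=> HX tl ti ta.
have ex i : exists j, X j == tau (X i).
  case: (HX) => _ H; have [j ->] : exists j, tau (X i) = X j.
    by apply: (proj1 (H _)); apply: aut_min => //; apply: X_min.
  by exists j.
pose tau' i := odflt i [pick j | X j == tau (X i)].
have htau i : tau (X i) = X (tau' i).
  rewrite /tau'; case: pickP => [j /eqP //|H].
  by have [j /eqP Hj] := ex i; move: (H j); rewrite Hj eqxx.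
exists tau'; split => // i.
case: (HX) => inj _; apply: inj.
by rewrite -!htau ti.
Qed.

End MinIdem.

Lemma scal_inj (C : numClosedFieldType) (Q : vectType C) (v : Q) a b :
  v != 0 -> a *: v = b *: v -> a = b.
Proof.
move=> v0 /eqP; rewrite -subr_eq0 -scalerBl scaler_eq0 (negbTE v0) orbF subr_eq0.
by move/eqP.
Qed.

Section Form.
Variables (C : numClosedFieldType) (Q : vectType C) (m : Q -> Q -> Q) (e : Q)
  (s : Q -> Q) (t : Q -> C).
Hypotheses (Hm : comm_assoc_unital_bilinear m e) (Ht : lin_functional t)
  (Hs : antilinear s) (Hsi : involutive s) (Hsa : ring_aut m e s)
  (Hts : forall a, t (s a) = (t a)^*)
  (Hpos : forall a, a != 0 -> 0 < t (m a (s a))).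
Let mC := mC Hm. Let mA := mA Hm. Let m1 := m1 Hm. Let mr1 := mr1 Hm.
Let mDl := mDl Hm. Let mDr := mDr Hm. Let mZl := mZl Hm. Let mZr := mZr Hm.
Let m0l := m0l Hm. Let m0r := m0r Hm. Let msuml := msuml Hm. Let msumr := msumr Hm.
Let tD := tD Ht. Let tZ := tZ Ht. Let t0 := t0 Ht. Let tsum := tsum Ht.
Let Hred := red Hm Ht Hs Hsi Hsa Hpos.
Local Notation h := (hf m s t).
Let hDl := hDl s Hm Ht. Let hZl := hZl s Hm Ht. Let hsuml := hsuml s Hm Ht.
Let hpos := @hpos _ _ m s t Hpos.

Variable k : nat.
Variable X : 'I_k -> Q.
Hypothesis HX : enumerates (min_idem m) X.
Let X_idem := X_idem HX. Let X_neq0 := X_neq0 HX.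

Lemma Xs i : s (X i) = X i.
Proof.
apply/eqP; apply/negPn/negP => H.
have := hpos (X_neq0 i); rewrite /hf.
rewrite (min_orth Hm Hred (X_min HX i)) ?t0 ?ltxx //.
  exact: (aut_min Hs Hsi Hsa (X_min HX i)).
by rewrite eq_sym.
Qed.

Lemma hXX i j : h (X i) (X j) = h (X i) (X i) * (i == j)%:R.
Proof.
rewrite /hf !Xs (X_orthE Hm Hred HX) tZ X_idem.
by case: (i == j); rewrite ?mul1r ?mulr1 ?mul0r ?mulr0.
Qed.

Lemma hXt i : h (X i) (X i) = t (X i).
Proof. by rewrite /hf Xs X_idem. Qed.

Lemma hXpos i : 0 < h (X i) (X i).
Proof. exact: hpos. Qed.

Lemma hX0 i : h (X i) (X i) != 0.
Proof. by rewrite gt_eqF // hXpos. Qed.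

Definition cff x i := h x (X i) / h (X i) (X i).

Lemma cfP x i : m x (X i) = cff x i *: X i.
Proof.
have [a ha] := X_prim Hm Hred HX i x.
suff -> : cff x i = a by [].
have : h (m x (X i)) (X i) = h x (X i).
  by rewrite /hf Xs -mA X_idem.
rewrite ha hZl /cff => <-; rewrite mulfK //; exact: hX0.
Qed.

Lemma expand x : x = \sum_i cff x i *: X i.
Proof.
rewrite {1}(X_expand Hm Hred HX x); apply: eq_bigr => i _; exact: cfP.
Qed.

Lemma cf_sum (r : 'I_k -> C) i : cff (\sum_l r l *: X l) i = r i.
Proof.
rewrite /cff hsuml (bigD1 i) //= hZl big1 ?addr0 ?mulfK //; first exact: hX0.
by move=> l li; rewrite hZl hXX (negbTE li) mulr0 mulr0.
Qed.

Lemma cfM x y i : cff (m x y) i = cff x i * cff y i.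
Proof.
apply: (@scal_inj _ _ (X i)); first exact: X_neq0.
by rewrite -cfP -mA cfP mZr cfP scalerA mulrC.
Qed.

Lemma cf_lin a x y i : cff (a *: x + y) i = a * cff x i + cff y i.
Proof. by rewrite /cff hDl hZl mulrDl mulrA. Qed.

Lemma cfe i : cff e i = 1.
Proof. by rewrite /cff /hf m1 Xs X_idem divff // -hXt; exact: hX0. Qed.

Lemma alg_iso : alg_iso_Cd m e k.
Proof.
exists (fun x => \row_i cff x i); split.
- by move=> a x y; apply/rowP => i; rewrite !mxE cf_lin.
- exists (fun r : 'rV_k => \sum_i r 0 i *: X i).
    by move=> x /=; rewrite [RHS]expand; apply: eq_bigr => i _; rewrite mxE.
  by move=> r; apply/rowP => i; rewrite mxE cf_sum.
- by move=> x y i; rewrite !mxE cfM.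
- by move=> i; rewrite mxE cfe.
Qed.

Lemma idem_decomp y : m y y = y ->
  exists b : 'I_k -> bool, y = \sum_i (b i : nat)%:R *: X i.
Proof.
move=> yy; exists (fun i => cff y i == 1).
rewrite {1}(expand y); apply: eq_bigr => i _.
have : cff y i * cff y i = cff y i by rewrite -cfM yy.
case: (eqVneq (cff y i) 1) => [->|c1] //= H.
have : cff y i = 0.
  move/eqP: H; rewrite -[X in _ == X]mulr1 -subr_eq0 -mulrBr mulf_eq0 subr_eq0.
  by rewrite (negbTE c1) orbF => /eqP.
by move->.
Qed.

Lemma cf_suml I (r : seq I) (P : pred I) (c : I -> C) (v : I -> Q) i :
  cff (\sum_(l <- r | P l) c l *: v l) i = \sum_(l <- r | P l) c l * cff (v l) i.
Proof.
rewrite /cff hsuml mulr_suml; apply: eq_bigr => l _; by rewrite hZl mulrA.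
Qed.

Lemma eq_cf u v : (forall i, cff u i = cff v i) -> u = v.
Proof.
by move=> H; rewrite (expand u) (expand v); apply: eq_bigr => i _; rewrite H.
Qed.

Lemma cfX l i : cff (X l) i = (l == i)%:R.
Proof.
rewrite /cff hXX; case: (eqVneq l i) => [->|li].
  by rewrite mulr1 divff //; exact: hX0.
by rewrite mulr0 mul0r.
Qed.

End Form.

Section Extract.
Variables (C : numClosedFieldType) (Q : vectType C) (o : ops Q).
Hypothesis hQ : is_char_algebra o.

Lemma ca_d : comm_assoc_unital_bilinear (dot o) (one_d o). Proof. by case: hQ => [[]]. Qed.
Lemma ca_x : comm_assoc_unital_bilinear (cross o) (one_x o). Proof. by case: hQ => [[_ []]]. Qed.
Lemma ca_td : lin_functional (tr_d o). Proof. by case: hQ => [[_ [_ []]]]. Qed.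
Lemma ca_tx : lin_functional (tr_x o). Proof. by case: hQ => [[_ [_ []]]]. Qed.
Lemma ca_pl : antilinear (piA o). Proof. by case: hQ => _ []. Qed.
Lemma ca_ml : antilinear (muA o). Proof. by case: hQ => _ []. Qed.
Lemma ca_pi : involutive (piA o). Proof. by case: hQ => _ []. Qed.
Lemma ca_mi : involutive (muA o). Proof. by case: hQ => _ []. Qed.
Lemma ca_pm x : piA o (muA o x) = muA o (piA o x). Proof. by case: hQ => _ []. Qed.
Lemma ca_pd : ring_aut (dot o) (one_d o) (piA o). Proof. by case: hQ => _ _ []. Qed.
Lemma ca_px : ring_aut (cross o) (one_x o) (piA o). Proof. by case: hQ => _ _ []. Qed.
Lemma ca_md : ring_aut (dot o) (one_d o) (muA o). Proof. by case: hQ => _ _ []. Qed.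
Lemma ca_mx : ring_aut (cross o) (one_x o) (muA o). Proof. by case: hQ => _ _ []. Qed.
Lemma ca_tdp a : tr_d o (piA o a) = (tr_d o a)^*. Proof. by case: hQ => _ _ _ [H _ _]; case: (H a). Qed.
Lemma ca_tdm a : tr_d o (muA o a) = (tr_d o a)^*. Proof. by case: hQ => _ _ _ [H _ _]; case: (H a). Qed.
Lemma ca_txp a : tr_x o (piA o a) = (tr_x o a)^*. Proof. by case: hQ => _ _ _ [H _ _]; case: (H a). Qed.
Lemma ca_txm a : tr_x o (muA o a) = (tr_x o a)^*. Proof. by case: hQ => _ _ _ [H _ _]; case: (H a). Qed.
Lemma ca_ii a b : tr_d o (dot o a (piA o b)) = tr_x o (cross o a (muA o b)).
Proof. by case: hQ => _ _ _ [_ H _]. Qed.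
Lemma ca_posd a : a != 0 -> 0 < tr_d o (dot o a (piA o a)).
Proof. by move=> a0; case: hQ => _ _ _ [_ _ H] _; apply: H. Qed.
Lemma ca_posx a : a != 0 -> 0 < tr_x o (cross o a (muA o a)).
Proof. by rewrite -ca_ii; apply: ca_posd. Qed.
Lemma ca_xx : dot o (one_x o) (one_x o) = one_x o. Proof. by case: hQ => _ _ _ _ []. Qed.
Lemma ca_n : exists n : C, [/\ n \is Num.real, 0 < n & cross o (one_d o) (one_d o) = n *: one_d o].
Proof. by case: hQ => _ _ _ _ []. Qed.
Lemma ipd a b : ip o a b = hf (dot o) (piA o) (tr_d o) a b. Proof. by []. Qed.
Lemma ipx a b : ip o a b = hf (cross o) (muA o) (tr_x o) a b. Proof. exact: ca_ii. Qed.

Lemma red_d x : dot o x x = 0 -> x = 0.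
Proof. exact: (red ca_d ca_td ca_pl ca_pi ca_pd ca_posd). Qed.
Lemma red_x x : cross o x x = 0 -> x = 0.
Proof. exact: (red ca_x ca_tx ca_ml ca_mi ca_mx ca_posx). Qed.

Lemma ip_conj (sg : Q -> Q) : (sg = piA o \/ sg = muA o) ->
  forall x y, ip o (sg x) (sg y) = (ip o x y)^*.
Proof.
move=> H x y; rewrite /ip.
case: H => ->.
  by case: ca_pd => _ [H _]; rewrite -H ca_tdp.
by case: ca_md => _ [H _]; rewrite ca_pm -H ca_tdm.
Qed.

End Extract.

Section Main.
Variables (C : numClosedFieldType) (Q : vectType C) (o : ops Q).
Hypothesis hQ : is_char_algebra o.
Let Dd := ca_d hQ. Let Td := ca_td hQ. Let Pl := ca_pl hQ. Let Pi := ca_pi hQ.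
Let Pd := ca_pd hQ. Let Posd := ca_posd hQ.
Let Dx := ca_x hQ. Let Tx := ca_tx hQ. Let Ml := ca_ml hQ. Let Mi := ca_mi hQ.
Let Mx := ca_mx hQ. Let Posx := ca_posx hQ.
Let Md := ca_md hQ. Let Px := ca_px hQ.
Let ipx := ipx hQ.

Variables (X Psi : 'I_(\dim {:Q}) -> Q).
Hypotheses (HX : enumerates (min_idem (dot o)) X) (HP : enumerates (min_idem (cross o)) Psi).

Lemma p2a i : piA o (X i) = X i. Proof. exact: (Xs Dd Td Pl Pi Pd Posd HX). Qed.
Lemma p2b j : muA o (Psi j) = Psi j. Proof. exact: (Xs Dx Tx Ml Mi Mx Posx HP). Qed.

Lemma p3a i i' : ip o (X i) (X i') = ip o (X i) (X i) * (i == i')%:R.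
Proof. exact: (hXX Dd Td Pl Pi Pd Posd HX). Qed.
Lemma p3b j j' : ip o (Psi j) (Psi j') = ip o (Psi j) (Psi j) * (j == j')%:R.
Proof. rewrite !ipx; exact: (hXX Dx Tx Ml Mi Mx Posx HP). Qed.
Lemma p3c i : ip o (X i) (X i) = tr_d o (X i) /\ 0 < ip o (X i) (X i).
Proof. split; [exact: (hXt Dd Td Pl Pi Pd Posd HX)|exact: (hXpos Posd HX)]. Qed.
Lemma p3d j : ip o (Psi j) (Psi j) = tr_x o (Psi j) /\ 0 < ip o (Psi j) (Psi j).
Proof. rewrite ipx; split; [exact: (hXt Dx Tx Ml Mi Mx Posx HP)|exact: (hXpos Posx HP)]. Qed.

Lemma ipC x y : ip o y x = (ip o x y)^*.
Proof. exact: (hC Dd Pi Pd (ca_tdp hQ)). Qed.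

Lemma p3e k l : ip o (Psi k) (Psi k) * (k == l)%:R =
  \sum_i (ip o (X i) (X i))^-1 * (ip o (X i) (Psi k))^* * ip o (X i) (Psi l).
Proof.
rewrite -p3b {1}(expand Dd Td Pl Pi Pd Posd HX (Psi k)) ipd (hsuml _ Dd Td).
apply: eq_bigr => i _; rewrite (hZl _ Dd Td) /cff -!ipd ipC.
by rewrite [_ / _]mulrC.
Qed.

Lemma p3f i j : ip o (X i) (X i) * (i == j)%:R =
  \sum_s (ip o (Psi s) (Psi s))^-1 * ip o (X i) (Psi s) * (ip o (X j) (Psi s))^*.
Proof.
rewrite -p3a {1}(expand Dx Tx Ml Mi Mx Posx HP (X i)) ipx (hsuml _ Dx Tx).
apply: eq_bigr => s _; rewrite (hZl _ Dx Tx) /cff -!ipx (ipC (X j)).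
by rewrite [_ / _]mulrC.
Qed.


Lemma ipsumr z I (r : seq I) (P : pred I) (F : I -> Q) :
  ip o z (\sum_(i <- r | P i) F i) = \sum_(i <- r | P i) ip o z (F i).
Proof.
rewrite ipC ipd (hsuml _ Dd Td) rmorph_sum; apply: eq_bigr => i _.
by rewrite -ipd [RHS]ipC.
Qed.

Lemma ipZr z a x : ip o z (a *: x) = a^* * ip o z x.
Proof. exact: (hZr Dd Td Pl). Qed.

Lemma p_perm : exists (mu' pi' : 'I_(\dim {:Q}) -> 'I_(\dim {:Q})),
  [/\ involutive mu' /\ involutive pi',
      (forall i, muA o (X i) = X (mu' i)) /\ (forall j, piA o (Psi j) = Psi (pi' j)) &
      [/\ forall i, ip o (X (mu' i)) (X (mu' i)) = ip o (X i) (X i),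
          forall j, ip o (Psi (pi' j)) (Psi (pi' j)) = ip o (Psi j) (Psi j),
          forall i j, ip o (X i) (Psi (pi' j)) = (ip o (X i) (Psi j))^* &
          forall i j, ip o (X (mu' i)) (Psi j) = (ip o (X i) (Psi j))^*]].
Proof.
have [mu' [mui hmu]] := aut_perm HX Ml Mi Md.
have [pi' [pii hpi]] := aut_perm HP Pl Pi Px.
exists mu', pi'; split => //; split.
- move=> i; rewrite -hmu (ip_conj hQ (or_intror erefl)) geC0_conj //.
  by apply: ltW; case: (p3c i).
- move=> j; rewrite -hpi (ip_conj hQ (or_introl erefl)) geC0_conj //.
  by apply: ltW; case: (p3d j).
- by move=> i j; rewrite -hpi -{1}(p2a i) (ip_conj hQ (or_introl erefl)).
- by move=> i j; rewrite -hmu -{1}(p2b j) (ip_conj hQ (or_intror erefl)).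
Qed.

Variable n : C.
Hypothesis hn : cross o (one_d o) (one_d o) = n *: one_d o.

Lemma n_props : one_d o != 0 -> n \is Num.real /\ n != 0.
Proof.
move=> o0; have [n' [n'r n'p hn']] := ca_n hQ.
have nn : n = n' by apply: (scal_inj o0); rewrite -hn -hn'.
by rewrite nn; split => //; rewrite gt_eqF.
Qed.

Lemma one_nz (i : 'I_(\dim {:Q})) : one_d o != 0.
Proof.
apply: contra (X_neq0 HX i) => /eqP o0.
by rewrite -[X i](mr1 Dd) o0 (m0r Dd).
Qed.

Lemma p5a : cross o (n^-1 *: one_d o) (n^-1 *: one_d o) = n^-1 *: one_d o.
Proof.
have [o0|o0] := eqVneq (one_d o) 0.
  by rewrite o0 scaler0 (m0l Dx).
have [_ n0] := n_props o0.
by rewrite (mZl Dx) (mZr Dx) hn !scalerA divfK.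
Qed.

Lemma p5b : (exists nj : 'I_(\dim {:Q}) -> bool, n^-1 *: one_d o = \sum_j (nj j : nat)%:R *: Psi j) /\
  (exists mi : 'I_(\dim {:Q}) -> bool, one_x o = \sum_i (mi i : nat)%:R *: X i).
Proof.
split; first exact: (idem_decomp Dx Tx Ml Mi Mx Posx HP p5a).
exact: (idem_decomp Dd Td Pl Pi Pd Posd HX (ca_xx hQ)).
Qed.

Lemma p5c (nj : 'I_(\dim {:Q}) -> bool) :
  n^-1 *: one_d o = \sum_j (nj j : nat)%:R *: Psi j ->
  forall i, ip o (X i) (X i) = n * \sum_j ip o (X i) (Psi j) * (nj j : nat)%:R.
Proof.
move=> hnj i; have [nr n0] := n_props (one_nz i).
have := f_equal (ip o (X i)) hnj; rewrite ipZr ipsumr.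
have -> : ip o (X i) (one_d o) = ip o (X i) (X i).
  rewrite (proj1 (p3c i)) /ip; case: Pd => _ [_ ->]; by rewrite (mr1 Dd).
rewrite conj_Creal ?realV // => H.
have -> : \sum_j ip o (X i) (Psi j) * (nj j : nat)%:R = n^-1 * ip o (X i) (X i).
  by rewrite H; apply: eq_bigr => j _; rewrite ipZr conjC_nat mulrC.
by rewrite mulVKf.
Qed.

Lemma p5d (mi : 'I_(\dim {:Q}) -> bool) :
  one_x o = \sum_i (mi i : nat)%:R *: X i ->
  forall j, ip o (Psi j) (Psi j) = \sum_i ip o (X i) (Psi j) * (mi i : nat)%:R.
Proof.
move=> hmi j.
have -> : ip o (Psi j) (Psi j) = ip o (one_x o) (Psi j).
  by rewrite (proj1 (p3d j)) ipx /hf (m1 Dx) p2b.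
rewrite hmi ipd (hsuml _ Dd Td); apply: eq_bigr => i _.
by rewrite (hZl _ Dd Td) mulrC.
Qed.

Lemma p5e i0 j0 : n^-1 *: one_d o = Psi j0 -> one_x o = X i0 ->
  (forall i, ip o (X i) (X i) = n * ip o (X i) (Psi j0)) /\
  (forall j, ip o (Psi j) (Psi j) = ip o (X i0) (Psi j)).
Proof.
move=> h1 h2; split.
  move=> i; rewrite (@p5c (fun j => j == j0)).
    rewrite (bigD1 j0) //= eqxx mulr1 big1 ?addr0 // => j /negPf ->.
    by rewrite mulr0.
  rewrite h1 (bigD1 j0) //= eqxx scale1r big1 ?addr0 // => j /negPf ->.
  by rewrite scale0r.
move=> j; rewrite (@p5d (fun i => i == i0)).
  rewrite (bigD1 i0) //= eqxx mulr1 big1 ?addr0 // => i /negPf ->.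
  by rewrite mulr0.
rewrite h2 (bigD1 i0) //= eqxx scale1r big1 ?addr0 // => i /negPf ->.
by rewrite scale0r.
Qed.

End Main.

Section Iso.
Variables (C : numClosedFieldType) (Q : vectType C) (o : ops Q).
Hypothesis hQ : is_char_algebra o.
Let Dd := ca_d hQ. Let Td := ca_td hQ. Let Pl := ca_pl hQ. Let Pi := ca_pi hQ.
Let Pd := ca_pd hQ. Let Posd := ca_posd hQ.
Let Dx := ca_x hQ. Let Tx := ca_tx hQ. Let Ml := ca_ml hQ. Let Mi := ca_mi hQ.
Let Mx := ca_mx hQ. Let Posx := ca_posx hQ.
Let Md := ca_md hQ.
Variables (Q2 : vectType C) (o2 : ops Q2).
Hypothesis hQ2 : is_char_algebra o2.
Let Dd2 := ca_d hQ2. Let Td2 := ca_td hQ2. Let Pl2 := ca_pl hQ2. Let Pi2 := ca_pi hQ2.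
Let Pd2 := ca_pd hQ2. Let Posd2 := ca_posd hQ2.
Let Dx2 := ca_x hQ2. Let Tx2 := ca_tx hQ2. Let Ml2 := ca_ml hQ2. Let Mi2 := ca_mi hQ2.
Let Mx2 := ca_mx hQ2. Let Posx2 := ca_posx hQ2.
Local Notation d := (\dim {:Q}).
Variables (X Psi : 'I_d -> Q) (X2 Psi2 : 'I_d -> Q2) (mu' : 'I_d -> 'I_d).
Hypotheses (HX : enumerates (min_idem (dot o)) X) (HP : enumerates (min_idem (cross o)) Psi).
Hypotheses (HX2 : enumerates (min_idem (dot o2)) X2) (HP2 : enumerates (min_idem (cross o2)) Psi2).
Hypotheses (hA : forall i, ip o2 (X2 i) (X2 i) = ip o (X i) (X i))
  (hB : forall j, ip o2 (Psi2 j) (Psi2 j) = ip o (Psi j) (Psi j))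
  (hCm : forall i j, ip o2 (X2 i) (Psi2 j) = ip o (X i) (Psi j))
  (hmu : forall i, muA o (X i) = X (mu' i))
  (hmu2 : forall i, muA o2 (X2 i) = X2 (mu' i)).

Local Notation cd := (cff (dot o) (piA o) (tr_d o) X).
Local Notation cx := (cff (cross o) (muA o) (tr_x o) Psi).
Local Notation cd2 := (cff (dot o2) (piA o2) (tr_d o2) X2).
Local Notation cx2 := (cff (cross o2) (muA o2) (tr_x o2) Psi2).

Definition fiso x := \sum_i cd x i *: X2 i.

Lemma F1 x i : cd2 (fiso x) i = cd x i.
Proof. by rewrite /fiso (cf_sum Dd2 Td2 Pl2 Pi2 Pd2 Posd2 HX2). Qed.

Lemma eq2 u v : (forall i, cd2 u i = cd2 v i) -> u = v.
Proof. exact: (eq_cf Dd2 Td2 Pl2 Pi2 Pd2 Posd2 HX2). Qed.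

Lemma F2 a x y : fiso (a *: x + y) = a *: fiso x + fiso y.
Proof.
apply: eq2 => i; rewrite F1 (cf_lin _ Dd Td) /fiso.
have -> : a *: \sum_i cd x i *: X2 i + \sum_i cd y i *: X2 i =
  \sum_i (a * cd x i + cd y i) *: X2 i.
  by rewrite scaler_sumr -big_split /=; apply: eq_bigr => l _; rewrite scalerDl scalerA.
by rewrite (cf_sum Dd2 Td2 Pl2 Pi2 Pd2 Posd2 HX2).
Qed.

Lemma F3 I (r : seq I) (P : pred I) (c : I -> C) (v : I -> Q) :
  fiso (\sum_(l <- r | P l) c l *: v l) = \sum_(l <- r | P l) c l *: fiso (v l).
Proof.
apply: eq2 => i; rewrite F1 (cf_suml _ Dd Td) (cf_suml _ Dd2 Td2).
by apply: eq_bigr => l _; rewrite F1.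
Qed.

Lemma F4 l : fiso (X l) = X2 l.
Proof.
apply: eq2 => i; rewrite F1 (cfX Dd Td Pl Pi Pd Posd HX).
by rewrite (cfX Dd2 Td2 Pl2 Pi2 Pd2 Posd2 HX2).
Qed.

Lemma F5 j : fiso (Psi j) = Psi2 j.
Proof.
apply: eq2 => i; rewrite F1 /cff -!ipd (ipC hQ) (ipC hQ2) hCm hA.
by [].
Qed.

Lemma F6 x : fiso x = \sum_j cx x j *: Psi2 j.
Proof.
rewrite {1}(expand Dx Tx Ml Mi Mx Posx HP x) F3.
by apply: eq_bigr => j _; rewrite F5.
Qed.

Lemma F7 x j : cx2 (fiso x) j = cx x j.
Proof. by rewrite F6 (cf_sum Dx2 Tx2 Ml2 Mi2 Mx2 Posx2 HP2). Qed.

Lemma iso_ok : char_alg_iso o o2 fiso.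
Proof.
split.
- exact: F2.
- exists (fun y => \sum_i cd2 y i *: X i).
    move=> x /=; rewrite [RHS](expand Dd Td Pl Pi Pd Posd HX x).
    by apply: eq_bigr => i _; rewrite F1.
  move=> y /=; apply: eq2 => i; rewrite F1.
  exact: (cf_sum Dd Td Pl Pi Pd Posd HX).
- split => x y.
    apply: eq2 => i; rewrite F1 (cfM Dd Td Pl Pi Pd Posd HX).
    by rewrite (cfM Dd2 Td2 Pl2 Pi2 Pd2 Posd2 HX2) !F1.
  apply: (eq_cf Dx2 Tx2 Ml2 Mi2 Mx2 Posx2 HP2) => j.
  rewrite F7 (cfM Dx Tx Ml Mi Mx Posx HP).
  by rewrite (cfM Dx2 Tx2 Ml2 Mi2 Mx2 Posx2 HP2) !F7.
- split => x.
    rewrite /fiso (tsum Td2) {2}(expand Dd Td Pl Pi Pd Posd HX x) (tsum Td).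
    apply: eq_bigr => i _; rewrite !(tZ Td2) (tZ Td); congr (_ * _).
    by rewrite -(hXt Dd Td Pl Pi Pd Posd HX) -(hXt Dd2 Td2 Pl2 Pi2 Pd2 Posd2 HX2) -!ipd hA.
  rewrite F6 (tsum Tx2) {2}(expand Dx Tx Ml Mi Mx Posx HP x) (tsum Tx).
  apply: eq_bigr => j _; rewrite !(tZ Tx2) (tZ Tx); congr (_ * _).
  rewrite -(hXt Dx Tx Ml Mi Mx Posx HP) -(hXt Dx2 Tx2 Ml2 Mi2 Mx2 Posx2 HP2).
  by rewrite -(ipx hQ) -(ipx hQ2) hB.
- split => x.
    rewrite {1}(expand Dd Td Pl Pi Pd Posd HX x) (ssum Pl).
    under eq_bigr => i _ do rewrite (sZ Pl) (Xs Dd Td Pl Pi Pd Posd HX).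
    rewrite F3; under eq_bigr => i _ do rewrite F4.
    rewrite /fiso (ssum Pl2); apply: eq_bigr => i _.
    by rewrite (sZ Pl2) (Xs Dd2 Td2 Pl2 Pi2 Pd2 Posd2 HX2).
  rewrite {1}(expand Dd Td Pl Pi Pd Posd HX x) (ssum Ml).
  under eq_bigr => i _ do rewrite (sZ Ml) hmu.
  rewrite F3; under eq_bigr => i _ do rewrite F4.
  rewrite /fiso (ssum Ml2); apply: eq_bigr => i _.
  by rewrite (sZ Ml2) hmu2.
Qed.

End Iso.


Unset Implicit Arguments.

Theorem propositionP (C : numClosedFieldType) (Q : vectType C) (o : ops Q) (n : C)
  (hQ : is_char_algebra o)
  (hn : cross o (one_d o) (one_d o) = n *: one_d o) :
  let d := \dim (fullv : {vspace Q}) in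
  [/\ (* (1) *)
      alg_iso_Cd (dot o) (one_d o) d /\ alg_iso_Cd (cross o) (one_x o) d,
      exists X : 'I_d -> Q, enumerates (min_idem (dot o)) X,
      exists Psi : 'I_d -> Q, enumerates (min_idem (cross o)) Psi &
      forall (X Psi : 'I_d -> Q),
        enumerates (min_idem (dot o)) X ->
        enumerates (min_idem (cross o)) Psi ->
        let A i := ip o (X i) (X i) in
        let B j := ip o (Psi j) (Psi j) in
        let Cm i j := ip o (X i) (Psi j) in
        [/\ (* (2) *)
            (forall i, piA o (X i) = X i) /\ (forall j, muA o (Psi j) = Psi j),
            (* (2), (3) symmetries, (4) *)
            exists (mu' pi' : 'I_d -> 'I_d),
              [/\ involutive mu' /\ involutive pi',
                  (forall i, muA o (X i) = X (mu' i)) /\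
                  (forall j, piA o (Psi j) = Psi (pi' j)),
                  [/\ forall i, A (mu' i) = A i,
                      forall j, B (pi' j) = B j,
                      forall i j, Cm i (pi' j) = (Cm i j)^* &
                      forall i j, Cm (mu' i) j = (Cm i j)^*] &
                  (* (4) *)
                  forall (Q2 : vectType C) (o2 : ops Q2) (X2 Psi2 : 'I_d -> Q2),
                    is_char_algebra o2 ->
                    enumerates (min_idem (dot o2)) X2 ->
                    enumerates (min_idem (cross o2)) Psi2 ->
                    (forall i, ip o2 (X2 i) (X2 i) = A i) ->
                    (forall j, ip o2 (Psi2 j) (Psi2 j) = B j) ->
                    (forall i j, ip o2 (X2 i) (Psi2 j) = Cm i j) ->
                    (forall i, muA o2 (X2 i) = X2 (mu' i)) ->
                    (forall j, piA o2 (Psi2 j) = Psi2 (pi' j)) ->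
                    exists f : Q -> Q2, char_alg_iso o o2 f],
            (* (3) *)
            [/\ forall i i', ip o (X i) (X i') = A i * (i == i')%:R,
                forall j j', ip o (Psi j) (Psi j') = B j * (j == j')%:R,
                forall i, A i = tr_d o (X i) /\ 0 < A i,
                forall j, B j = tr_x o (Psi j) /\ 0 < B j &
                (forall k l, B k * (k == l)%:R = \sum_i (A i)^-1 * (Cm i k)^* * Cm i l) /\
                (forall i j, A i * (i == j)%:R = \sum_s (B s)^-1 * Cm i s * (Cm j s)^*)] &
            (* (5) *)
            [/\ cross o (n^-1 *: one_d o) (n^-1 *: one_d o) = n^-1 *: one_d o
                /\ dot o (one_x o) (one_x o) = one_x o,
                (exists nj : 'I_d -> bool, n^-1 *: one_d o = \sum_j (nj j : nat)%:R *: Psi j) /\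
                (exists mi : 'I_d -> bool, one_x o = \sum_i (mi i : nat)%:R *: X i),
                forall nj : 'I_d -> bool, n^-1 *: one_d o = \sum_j (nj j : nat)%:R *: Psi j ->
                  forall i, A i = n * \sum_j Cm i j * (nj j : nat)%:R,
                forall mi : 'I_d -> bool, one_x o = \sum_i (mi i : nat)%:R *: X i ->
                  forall j, B j = \sum_i Cm i j * (mi i : nat)%:R &
                forall i0 j0, n^-1 *: one_d o = Psi j0 -> one_x o = X i0 ->
                  (forall i, A i = n * Cm i j0) /\ (forall j, B j = Cm i0 j)]]].
Proof.
move=> d.
have Dd := ca_d hQ. have Td := ca_td hQ. have Pl := ca_pl hQ. have Pi := ca_pi hQ.
have Pd := ca_pd hQ. have Posd := ca_posd hQ.
have Dx := ca_x hQ. have Tx := ca_tx hQ. have Ml := ca_ml hQ. have Mi := ca_mi hQ.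
have Mx := ca_mx hQ. have Posx := ca_posx hQ.
have [X0 HX0] := exists_enum Dd (red_d hQ).
have [P0 HP0] := exists_enum Dx (red_x hQ).
split.
- split; first exact: (alg_iso Dd Td Pl Pi Pd Posd HX0).
  exact: (alg_iso Dx Tx Ml Mi Mx Posx HP0).
- by exists X0.
- by exists P0.
move=> X Psi HX HP A B Cm; split.
- exact: (conj (p2a hQ HX) (p2b hQ HP)).
- have [mu' [pi' [[mui pii] [hmu hpi] [s1 s2 s3 s4]]]] := p_perm hQ HX HP.
  exists mu', pi'; split => //.
  move=> Q2 o2 X2 Psi2 hQ2 HX2 HP2 hA hB hCm hmu2 hpi2.
  by eexists; apply: (iso_ok hQ hQ2 HX HP HX2 HP2 hA hB hCm hmu hmu2).
- split.
  + exact: (p3a hQ HX).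
  + exact: (p3b hQ HP).
  + exact: (p3c hQ HX).
  + exact: (p3d hQ HP).
  + exact: (conj (p3e hQ HX HP) (p3f hQ HX HP)).
- split.
  + exact: (conj (p5a hQ hn) (ca_xx hQ)).
  + exact: (p5b hQ HX HP hn).
  + exact: (p5c hQ HX hn).
  + exact: (@p5d _ _ _ hQ X Psi HP).
  + exact: (p5e hQ HX HP hn).
Qed.
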